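(* Let $\mathbf{L}\in\{\mathbf{K}_D,\mathbf{KD}_D,\mathbf{KT}_D\}$. For every formula $A$: $\mathsf{H}(\mathbf{L})\vdash A$ if and only if $\mathsf{G}(\mathbf{L})\vdash\;\Rightarrow A$.
   Context: Language: fix a finite nonempty set $\mathsf{Agt}$ of agents and a countable set $\mathsf{Prop}$ of propositional variables; $\mathsf{Grp}$ is the set of nonempty subsets of $\mathsf{Agt}$. Formulas: $\alpha::=p\mid\bot\mid\alpha\wedge\alpha\mid\alpha\vee\alpha\mid\alpha\rightarrow\alpha\mid\neg\alpha\mid D_G\alpha$ ($p\in\mathsf{Prop}$, $G\in\mathsf{Grp}$). Outmost-boxed formula: one of the form $D_G\gamma$. Hilbert systems: $\mathsf{H}(\mathbf{K}_D)$ has all instances of propositional tautologies, $D_G(\alpha\rightarrow\beta)\rightarrow(D_G\alpha\rightarrow D_G\beta)$, $D_G\alpha\rightarrow D_H\alpha$ for $G\subseteq H$, modus ponens, and necessitation (from $\alpha$ infer $D_G\alpha$). $\mathsf{H}(\mathbf{KD}_D)$ adds $\neg D_{\{a\}}\bot$ for each $a\in\mathsf{Agt}$; $\mathsf{H}(\mathbf{KT}_D)$ adds $D_G\alpha\rightarrow\alpha$. Sequent calculi (sequents $\Gamma\Rightarrow\Delta$ are pairs of finite multisets; derivable = root of a finite tree built from initial sequents by rules): $\mathsf{G}(\mathbf{K}_D)$ has initial sequents $\Gamma,p\Rightarrow p,\Delta$ and $\bot,\Gamma\Rightarrow\Delta$; rules $(R\wedge)$ from $\Gamma\Rightarrow\Delta,\alpha_1$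 and $\Gamma\Rightarrow\Delta,\alpha_2$ infer $\Gamma\Rightarrow\Delta,\alpha_1\wedge\alpha_2$; $(L\wedge)$ from $\alpha_1,\alpha_2,\Gamma\Rightarrow\Delta$ infer $\alpha_1\wedge\alpha_2,\Gamma\Rightarrow\Delta$; $(R\vee)$ from $\Gamma\Rightarrow\Delta,\alpha_1,\alpha_2$ infer $\Gamma\Rightarrow\Delta,\alpha_1\vee\alpha_2$; $(L\vee)$ from $\alpha_1,\Gamma\Rightarrow\Delta$ and $\alpha_2,\Gamma\Rightarrow\Delta$ infer $\alpha_1\vee\alpha_2,\Gamma\Rightarrow\Delta$; $(R\rightarrow)$ from $\alpha_1,\Gamma\Rightarrow\Delta,\alpha_2$ infer $\Gamma\Rightarrow\Delta,\alpha_1\rightarrow\alpha_2$; $(L\rightarrow)$ from $\Gamma\Rightarrow\Delta,\alpha_1$ and $\alpha_2,\Gamma\Rightarrow\Delta$ infer $\alpha_1\rightarrow\alpha_2,\Gamma\Rightarrow\Delta$; $(R\neg)$ from $\alpha,\Gamma\Rightarrow\Delta$ infer $\Gamma\Rightarrow\Delta,\neg\alpha$; $(L\neg)$ from $\Gamma\Rightarrow\Delta,\alpha$ infer $\neg\alpha,\Gamma\Rightarrow\Delta$; $(D_K)$: from $\alpha_1,\dots,\alpha_n\Rightarrow\beta$ ($n\ge0$) infer $\Sigma,D_{G_1}\alpha_1,\dots,D_{G_n}\alpha_n\Rightarrow D_G\beta,\Omega$ where all $G_i\subseteq G$, $\Sigma$ consists only of propositional variables, $\bot$, and $D_H\gamma$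 with $H\not\subseteq G$, and $\Omega$ only of propositional variables, $\bot$, outmost-boxed formulas. $\mathsf{G}(\mathbf{KD}_D)$ adds $(D_D)$: from $\Gamma\Rightarrow$ with $\Gamma\neq\emptyset$ infer $\Sigma,D_{\{a\}}\Gamma\Rightarrow\Omega$ ($D_{\{a\}}\Gamma=\{D_{\{a\}}\gamma:\gamma\in\Gamma\}$), $\Sigma$ only propositional variables, $\bot$, $D_H\gamma$ with $H\neq\{a\}$; $\Omega$ only propositional variables, $\bot$, outmost-boxed formulas. $\mathsf{G}(\mathbf{KT}_D)$ adds to $\mathsf{G}(\mathbf{K}_D)$ $(D_T)$: from $D_G\alpha,\alpha,\Gamma\Rightarrow\Delta$ infer $D_G\alpha,\Gamma\Rightarrow\Delta$. *)

(* Defs.v *)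
From mathcomp Require Import all_boot.
From Stdlib Require List Permutation.
Set Implicit Arguments. Unset Strict Implicit. Unset Printing Implicit Defensive.

Section Logic.
Variable Agt : finType.

Record grp := Grp { gset : {set Agt}; gset_ne : gset != set0 }.

Inductive form : Type :=
| Var of nat
| Bot
| And of form & form
| Or of form & form
| Imp of form & form
| Neg of form
| Dbox of grp & form.

Fixpoint peval (v : form -> bool) (f : form) : bool :=
  match f with
  | Var p => v (Var p)
  | Bot => false
  | And a b => peval v a && peval v b
  | Or a b => peval v a || peval v b
  | Imp a b => peval v a ==> peval v b
  | Neg a => ~~ peval v a
  | Dbox G a => v (Dbox G a)
  end.

Definition taut_inst (f : form) : Prop := forall v, peval v f.

Inductive logic := LK | LKD | LKT.

Inductive hderiv (L : logic) : form -> Prop :=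
| H_taut A : taut_inst A -> hderiv L A
| H_K G a b : hderiv L (Imp (Dbox G (Imp a b)) (Imp (Dbox G a) (Dbox G b)))
| H_mono G H a : gset G \subset gset H -> hderiv L (Imp (Dbox G a) (Dbox H a))
| H_MP a b : hderiv L (Imp a b) -> hderiv L a -> hderiv L b
| H_Nec G a : hderiv L a -> hderiv L (Dbox G a)
| H_D (G : grp) (x : Agt) : L = LKD -> gset G = [set x] -> hderiv L (Neg (Dbox G Bot))
| H_T G a : L = LKT -> hderiv L (Imp (Dbox G a) a).

Definition omega_ok (f : form) : Prop :=
  match f with Var _ | Bot | Dbox _ _ => True | _ => False end.

Definition sigmaK_ok (G : grp) (f : form) : Prop :=
  match f with
  | Var _ | Bot => True
  | Dbox H _ => ~ (gset H \subset gset G)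
  | _ => False
  end.

Definition sigmaD_ok (x : Agt) (f : form) : Prop :=
  match f with
  | Var _ | Bot => True
  | Dbox H _ => gset H <> [set x]
  | _ => False
  end.

(* Sequent calculi G(K_D), G(KD_D), G(KT_D). Sequents are pairs of lists
   read as multisets: derivability is closed under permutation of either side. *)
Inductive gderiv (L : logic) : list form -> list form -> Prop :=
| G_perm Gm Dl Gm' Dl' : gderiv L Gm Dl ->
    Permutation.Permutation Gm Gm' -> Permutation.Permutation Dl Dl' -> gderiv L Gm' Dl'
| G_id p Gm Dl : gderiv L (Var p :: Gm) (Var p :: Dl)
| G_bot Gm Dl : gderiv L (Bot :: Gm) Dl
| G_Rand a1 a2 Gm Dl : gderiv L Gm (a1 :: Dl) -> gderiv L Gm (a2 :: Dl) ->
    gderiv L Gm (And a1 a2 :: Dl)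
| G_Land a1 a2 Gm Dl : gderiv L (a1 :: a2 :: Gm) Dl -> gderiv L (And a1 a2 :: Gm) Dl
| G_Ror a1 a2 Gm Dl : gderiv L Gm (a1 :: a2 :: Dl) -> gderiv L Gm (Or a1 a2 :: Dl)
| G_Lor a1 a2 Gm Dl : gderiv L (a1 :: Gm) Dl -> gderiv L (a2 :: Gm) Dl ->
    gderiv L (Or a1 a2 :: Gm) Dl
| G_Rimp a1 a2 Gm Dl : gderiv L (a1 :: Gm) (a2 :: Dl) -> gderiv L Gm (Imp a1 a2 :: Dl)
| G_Limp a1 a2 Gm Dl : gderiv L Gm (a1 :: Dl) -> gderiv L (a2 :: Gm) Dl ->
    gderiv L (Imp a1 a2 :: Gm) Dl
| G_Rneg a Gm Dl : gderiv L (a :: Gm) Dl -> gderiv L Gm (Neg a :: Dl)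
| G_Lneg a Gm Dl : gderiv L Gm (a :: Dl) -> gderiv L (Neg a :: Gm) Dl
| G_DK (ps : list (grp * form)) (b : form) (G : grp) (Sg Om : list form) :
    List.Forall (fun p => gset p.1 \subset gset G) ps ->
    List.Forall (sigmaK_ok G) Sg ->
    List.Forall omega_ok Om ->
    gderiv L (List.map snd ps) (b :: nil) ->
    gderiv L (Sg ++ List.map (fun p => Dbox p.1 p.2) ps) (Dbox G b :: Om)
| G_DD (x : Agt) (Ga : grp) (Gm Sg Om : list form) :
    L = LKD -> gset Ga = [set x] -> Gm <> nil ->
    List.Forall (sigmaD_ok x) Sg ->
    List.Forall omega_ok Om ->
    gderiv L Gm nil ->
    gderiv L (Sg ++ List.map (Dbox Ga) Gm) Om
| G_DT G a Gm Dl : L = LKT ->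
    gderiv L (Dbox G a :: a :: Gm) Dl -> gderiv L (Dbox G a :: Gm) Dl.

End Logic.

(* Main.v *)
Require Import Defs.
From mathcomp Require Import all_boot.
From Stdlib Require Import Permutation Classical ClassicalEpsilon.
From mathcomp Require Import zify.
Set Implicit Arguments. Unset Strict Implicit. Unset Printing Implicit Defensive.

Section S1.
Variable Agt : finType.
Variable L : logic.
Local Notation form := (form Agt).
Local Notation Var := (Var Agt).
Local Notation Bot := (Bot Agt).

Fixpoint conjl (l : list form) : form :=
  match l with nil => Neg Bot | a :: l' => And a (conjl l') end.
Fixpoint disjl (l : list form) : form :=
  match l with nil => Bot | a :: l' => Or a (disjl l') end.

Lemma conjlE v l : peval v (conjl l) = all (peval v) l.
Proof. by elim: l => //= a l ->. Qed.
Lemma disjlE v l : peval v (disjl l) = has (peval v) l.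
Proof. by elim: l => //= a l ->. Qed.

Lemma perm_all (f : form -> bool) l l' : Permutation l l' -> all f l = all f l'.
Proof.
elim => //= [x m m' _ -> | x y m | m m' m'' _ -> _ ->] //.
by rewrite !andbA (andbC (f y)).
Qed.
Lemma perm_has (f : form -> bool) l l' : Permutation l l' -> has f l = has f l'.
Proof.
elim => //= [x m m' _ -> | x y m | m m' m'' _ -> _ ->] //.
by rewrite !orbA (orbC (f y)).
Qed.

Lemma hmp1 (A B : form) : hderiv L A -> (forall v, peval v A -> peval v B) -> hderiv L B.
Proof.
move=> hA hAB; apply: (H_MP _ hA); apply: H_taut => v /=.
by apply/implyP; apply: hAB.
Qed.
Lemma hmp2 (A B C : form) : hderiv L A -> hderiv L B ->
  (forall v, peval v A -> peval v B -> peval v C) -> hderiv L C.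
Proof.
move=> hA hB hC; apply: (H_MP _ hB); apply: (H_MP _ hA); apply: H_taut => v /=.
by apply/implyP => a; apply/implyP; apply: hC.
Qed.
Lemma hmp3 (A B C D : form) : hderiv L A -> hderiv L B -> hderiv L C ->
  (forall v, peval v A -> peval v B -> peval v C -> peval v D) -> hderiv L D.
Proof.
move=> hA hB hC hD; apply: (H_MP _ hC); apply: (H_MP _ hB); apply: (H_MP _ hA).
apply: H_taut => v /=.
by apply/implyP => a; apply/implyP => b; apply/implyP; apply: hD.
Qed.

Lemma boxlemma G (ps : list (grp Agt * form)) c :
  List.Forall (fun p => gset p.1 \subset gset G) ps ->
  hderiv L (Imp (conjl (List.map snd ps)) c) ->
  hderiv L (Imp (conjl (List.map (fun p => Dbox p.1 p.2) ps)) (Dbox G c)).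
Proof.
elim: ps c => [|[H a] ps IH] c /= hF h.
  have hc : hderiv L c by apply: (hmp1 h) => v /=.
  by apply: (hmp1 (H_Nec G hc)) => v /= ->.
inversion hF; subst => /=.
have h1 : hderiv L (Imp (conjl (List.map snd ps)) (Imp a c)).
  apply: (hmp1 h) => v /=; by case: (peval v a); case: (peval v (conjl _)); case: (peval v c).
have := IH _ H3 h1 => h2.
apply: (hmp3 h2 (H_K L G a c) (H_mono L a H2)) => v /=.
by case: (v (Dbox H a)); case: (v (Dbox G a)); case: (v (Dbox G c));
   case: (v (Dbox G (Imp a c))); case: (peval v (conjl _)).
Qed.

Lemma g2h Gm Dl : gderiv L Gm Dl -> hderiv L (Imp (conjl Gm) (disjl Dl)).
Proof.
elim=> {Gm Dl}.
- move=> Gm Dl Gm' Dl' _ IH p1 p2; apply: (hmp1 IH) => v /=.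
  by rewrite !conjlE !disjlE (perm_all _ p1) (perm_has _ p2).
- by move=> p Gm Dl; apply: H_taut => v /=; case: (v (Var p)); rewrite ?implybT.
- by move=> Gm Dl; apply: H_taut => v.
- move=> a1 a2 Gm Dl _ IH1 _ IH2; apply: (hmp2 IH1 IH2) => v /=.
  by case: (peval v a1); case: (peval v a2); case: (peval v (conjl _)); case: (peval v (disjl _)).
- move=> a1 a2 Gm Dl _ IH; apply: (hmp1 IH) => v /=.
  by case: (peval v a1); case: (peval v a2); case: (peval v (conjl _)); case: (peval v (disjl _)).
- move=> a1 a2 Gm Dl _ IH; apply: (hmp1 IH) => v /=.
  by case: (peval v a1); case: (peval v a2); case: (peval v (conjl _)); case: (peval v (disjl _)).
- move=> a1 a2 Gm Dl _ IH1 _ IH2; apply: (hmp2 IH1 IH2) => v /=.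
  by case: (peval v a1); case: (peval v a2); case: (peval v (conjl _)); case: (peval v (disjl _)).
- move=> a1 a2 Gm Dl _ IH; apply: (hmp1 IH) => v /=.
  by case: (peval v a1); case: (peval v a2); case: (peval v (conjl _)); case: (peval v (disjl _)).
- move=> a1 a2 Gm Dl _ IH1 _ IH2; apply: (hmp2 IH1 IH2) => v /=.
  by case: (peval v a1); case: (peval v a2); case: (peval v (conjl _)); case: (peval v (disjl _)).
- move=> a Gm Dl _ IH; apply: (hmp1 IH) => v /=.
  by case: (peval v a); case: (peval v (conjl _)); case: (peval v (disjl _)).
- move=> a Gm Dl _ IH; apply: (hmp1 IH) => v /=.
  by case: (peval v a); case: (peval v (conjl _)); case: (peval v (disjl _)).
- move=> ps b G Sg Om hps _ _ _ IH.
  have h1 : hderiv L (Imp (conjl (List.map snd ps)) b).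
    apply: (hmp1 IH) => v /=; by case: (peval v b); rewrite ?implybT.
  apply: (hmp1 (boxlemma hps h1)) => v /=.
  rewrite !conjlE all_cat; case: (all _ Sg) => //=.
  by case: (v (Dbox G b)); case: (all _ _); rewrite ?implybT.
- move=> x Ga Gm Sg Om HL HGa _ _ _ _ IH.
  set ps := List.map (fun a => (Ga, a)) Gm.
  have e1 : List.map snd ps = Gm by rewrite /ps List.map_map List.map_id.
  have e2 : List.map (fun p => Dbox p.1 p.2) ps = List.map (Dbox Ga) Gm by rewrite /ps List.map_map.
  have hps : List.Forall (fun p => gset p.1 \subset gset Ga) ps.
    by apply/List.Forall_forall => p /List.in_map_iff [a [<- _]] /=.
  have h1 : hderiv L (Imp (conjl (List.map snd ps)) Bot).
    by rewrite e1.
  have := boxlemma hps h1; rewrite e2 => h2.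
  apply: (hmp2 h2 (H_D HL HGa)) => v /=.
  rewrite !conjlE all_cat; case: (all _ Sg) => //=.
  by case: (v (Dbox Ga Bot)); case: (all _ _).
- move=> G a Gm Dl HL _ IH; apply: (hmp2 IH (H_T G a HL)) => v /=.
  by case: (v (Dbox G a)); case: (peval v a); case: (peval v (conjl _)); case: (peval v (disjl _)).
Qed.

End S1.

Section S.
Variable Agt : finType.
Variable L : logic.
Local Notation form := (form Agt).
Local Notation Var := (Var Agt).
Local Notation Bot := (Bot Agt).

Inductive tree := Node : (nat -> bool) -> {set Agt} -> {set Agt} -> list tree -> tree.
Definition tval t := let: Node v _ _ _ := t in v.
Definition trf t := let: Node _ r _ _ := t in r.
Definition tlab t := let: Node _ _ l _ := t in l.
Definition tch t := let: Node _ _ _ c := t in c.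

Fixpoint sat (f : form) (t : tree) {struct f} : bool :=
  match f with
  | Defs.Var p => tval t p
  | Defs.Bot => false
  | And a b => sat a t && sat b t
  | Or a b => sat a t || sat b t
  | Imp a b => sat a t ==> sat b t
  | Neg a => ~~ sat a t
  | Dbox G a => ((gset G \subset trf t) ==> sat a t) &&
                all (fun c => (gset G \subset tlab c) ==> sat a c) (tch t)
  end.

Definition cond (rf : {set Agt}) (ch : list tree) : Prop :=
  match L with
  | LK => True
  | LKT => rf = setT
  | LKD => forall x, x \in rf \/ exists c, List.In c ch /\ x \in tlab c
  end.

Inductive good : tree -> Prop :=
| gnode v rf lb ch : cond rf ch -> (forall c, List.In c ch -> good c) -> good (Node v rf lb ch).

Lemma good_ch t c : good t -> List.In c (tch t) -> good c.
Proof. by case=> v rf lb ch _ H /=; apply: H. Qed.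

Lemma peval_sat t f : peval (fun g => sat g t) f = sat f t.
Proof. by elim: f => //= [a -> b -> | a -> b -> | a -> b -> | a ->]. Qed.

Lemma allP' (p : tree -> bool) l : all p l <-> (forall c, List.In c l -> p c).
Proof.
elim: l => //= a l IH; split.
  by move=> /andP [pa /IH H] c [<-|/H].
by move=> H; rewrite H ?(proj2 IH) //; [move=> c hc; apply: H; right | left].
Qed.

Lemma hsound A : hderiv L A -> forall t, good t -> sat A t.
Proof.
elim=> {A}.
- by move=> A hA t _; rewrite -peval_sat; apply: hA.
- move=> G a b t _ /=; apply/implyP => /andP [h1 /allP' h2]; apply/implyP => /andP [h3 /allP' h4].
  apply/andP; split.
    by apply/implyP => hs; move: (implyP h1 hs) => /implyP; apply; exact: (implyP h3 hs).
  apply/allP' => c hc; apply/implyP => hs.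
  by move/implyP: (h2 c hc) => /(_ hs) /implyP; apply; move/implyP: (h4 c hc); apply.
- move=> G H a sGH t _ /=; apply/implyP => /andP [h1 /allP' h2]; apply/andP; split.
    by apply/implyP => hs; apply: (implyP h1); apply: subset_trans hs.
  apply/allP' => c hc; apply/implyP => hs; apply: (implyP (h2 c hc)).
  exact: subset_trans hs.
- move=> a b _ IH1 _ IH2 t gt; by move/implyP: (IH1 t gt); apply; apply: IH2.
- move=> G a _ IH t gt /=; apply/andP; split; first by apply/implyP => _; apply: IH.
  by apply/allP' => c hc; apply/implyP => _; apply: IH; apply: good_ch gt hc.
- move=> G x HL HG t gt /=; case: gt => v rf lb ch; rewrite /cond HL => /(_ x) hc _ /=.
  rewrite HG sub1set; apply/negP => /andP [h1 /allP' h2].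
  case: hc => [hx | [c [hc hx]]]; first by move: h1; rewrite hx.
  by move: (h2 c hc); rewrite sub1set hx.
- move=> G a HL t gt /=; case: gt => v rf lb ch; rewrite /cond HL => -> _ /=.
  by apply/implyP => /andP []; rewrite subsetT.
Qed.


Definition cpl (f : form) : bool :=
  match f with And _ _ | Or _ _ | Imp _ _ | Neg _ => true | _ => false end.
Definition isbox (f : form) : bool := if f is Dbox _ _ then true else false.
Fixpoint fsize (f : form) : nat :=
  match f with
  | Defs.Var _ | Defs.Bot => 1
  | And a b | Or a b | Imp a b => (fsize a + fsize b).+1
  | Neg a | Dbox _ a => (fsize a).+1
  end.
Fixpoint md (f : form) : nat :=
  match f with
  | Defs.Var _ | Defs.Bot => 0
  | And a b | Or a b | Imp a b => maxn (md a) (md b)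
  | Neg a => md a
  | Dbox _ a => (md a).+1
  end.
Definition dec (P : Prop) : bool := if excluded_middle_informative P then true else false.
Lemma decP P : reflect P (dec P).
Proof. by rewrite /dec; case: excluded_middle_informative => h; constructor. Qed.

Definition al E f := if cpl f || (isbox f && ~~ dec (List.In f E)) then fsize f else 0.
Definition cw f := if cpl f then fsize f else 0.
Fixpoint maxl (g : form -> nat) (l : list form) : nat :=
  if l is a :: l' then maxn (g a) (maxl g l') else 0.
Fixpoint suml (g : form -> nat) (l : list form) : nat :=
  if l is a :: l' then g a + suml g l' else 0.
Definition ma E G D := maxn (maxl (al E) G) (maxl cw D).
Definition mb G D := suml cw G + suml cw D.
Definition mdok n (l : list form) := forall f, List.In f l -> md f <= n.
Definition hypE E t (f : form) := forall g, List.In g E -> fsize g <= fsize f -> sat g t.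
Definition childpart (E : list form) t := forall H a, List.In (Dbox H a) E ->
  forall c, List.In c (tch t) -> gset H \subset tlab c -> sat a c.
Definition allbox (E : list form) := forall f, List.In f E -> isbox f.
Definition Concl E G D := exists t, good t /\ childpart E t /\
  (forall f, List.In f G -> hypE E t f -> sat f t) /\
  (forall f, List.In f D -> hypE E t f -> ~~ sat f t).
Definition Claim n A B := forall E G D, mdok n E -> mdok n G -> mdok n D -> allbox E ->
  ma E G D <= A -> mb G D <= B -> ~ gderiv L (G ++ E) D -> Concl E G D.

Lemma al_le E f : al E f <= fsize f.
Proof. by rewrite /al; case: ifP. Qed.
Lemma cw_le f : cw f <= fsize f.
Proof. by rewrite /cw; case: ifP. Qed.
Lemma al_cpl E f : cpl f -> al E f = fsize f.
Proof. by rewrite /al => ->. Qed.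
Lemma cw_cpl f : cpl f -> cw f = fsize f.
Proof. by rewrite /cw => ->. Qed.
Lemma fsize_gt0 f : 0 < fsize f.
Proof. by case: f. Qed.

Lemma maxl_le g l k : maxl g l <= k <-> (forall f, List.In f l -> g f <= k).
Proof.
elim: l => //= a l IH; split.
  by move=> h f [<-|hf]; [lia | apply/(proj1 IH); [lia|]].
move=> h; have := h a (or_introl erefl); have : maxl g l <= k.
  by apply/(proj2 IH) => f hf; apply: h; right.
lia.
Qed.

Lemma perm_maxl g l l' : Permutation l l' -> maxl g l = maxl g l'.
Proof. elim=> //= [x m m' _ -> | x y m | m m' m'' _ -> _ ->] //; lia. Qed.
Lemma perm_suml g l l' : Permutation l l' -> suml g l = suml g l'.
Proof. elim=> //= [x m m' _ -> | x y m | m m' m'' _ -> _ ->] //; lia. Qed.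

Lemma cat_app (T : Type) (s1 s2 : list T) : s1 ++ s2 = List.app s1 s2.
Proof. by elim: s1 => //= a s ->. Qed.

Lemma In_cat (T : Type) (f : T) (s1 s2 : list T) : List.In f (s1 ++ s2) <-> List.In f s1 \/ List.In f s2.
Proof. rewrite cat_app; exact: List.in_app_iff. Qed.

Lemma perm_front (f : form) l : List.In f l -> exists l0, Permutation l (f :: l0).
Proof.
move=> hf; case: (List.in_split _ _ hf) => l1 [l2 ->]; exists (List.app l1 l2).
by apply: Permutation_sym; apply: Permutation_middle.
Qed.

Lemma perm_catl (l l' m : list form) : Permutation l l' -> Permutation (l ++ m) (l' ++ m).
Proof. by rewrite !cat_app; apply: Permutation_app_tail. Qed.

Lemma hypE_mono E t f g : hypE E t f -> fsize g <= fsize f -> hypE E t g.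
Proof. by move=> h le g' hg le'; apply: h => //; lia. Qed.

Lemma concl_perm E G D G' D' : Permutation G G' -> Permutation D D' -> Concl E G' D' -> Concl E G D.
Proof.
move=> pG pD [t [gt [cp [hG hD]]]]; exists t; split=> //; split=> //; split.
  by move=> f hf; apply: hG; apply: Permutation_in hf.
by move=> f hf; apply: hD; apply: Permutation_in hf.
Qed.

Definition relabel t S := Node (tval t) (trf t) S (tch t).
Lemma sat_relabel f t S : sat f (relabel t S) = sat f t.
Proof. by elim: f => //= [a -> b -> | a -> b -> | a -> b -> | a -> | G a ->]. Qed.
Lemma good_relabel t S : good t -> good (relabel t S).
Proof. by case=> v rf lb ch hc hch /=; constructor. Qed.

Definition triv S := Node (fun _ => false) setT S nil.
Lemma good_triv S : good (triv S).
Proof.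
constructor; last by [].
by rewrite /cond; case: L => //= x; left; rewrite inE.
Qed.

Lemma grp_eq (H H' : grp Agt) : gset H = gset H' -> H = H'.
Proof.
case: H => s hs; case: H' => s' hs' /= e; subst s'.
by rewrite (eq_irrelevance hs hs').
Qed.

Lemma gset_sub0 (H : grp Agt) : ~ (gset H \subset set0).
Proof. by rewrite subset0; case: H => s hs /=; apply/negP. Qed.

Lemma gset_sub1 (H : grp Agt) x : gset H \subset [set x] -> gset H = [set x].
Proof.
rewrite subset1; case/orP => /eqP //; case: H => s hs /= e.
by move: hs; rewrite e eqxx.
Qed.


Lemma choice_list (X : Type) (P : X -> tree -> Prop) (l : list X) :
  (forall x, List.In x l -> exists t, P x t) ->
  exists ts, (forall x, List.In x l -> exists t, List.In t ts /\ P x t) /\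
             (forall t, List.In t ts -> exists x, List.In x l /\ P x t).
Proof.
elim: l => [|a l IH] h; first by exists nil; split.
case: (h a (or_introl erefl)) => t0 ht0.
case: IH => [x hx|ts [h1 h2]]; first by apply: h; right.
exists (t0 :: ts); split.
  move=> x [<-|hx]; first by exists t0; split => //; left.
  by case: (h1 x hx) => t [ht hp]; exists t; split => //; right.
move=> t [<-|ht]; first by exists a; split => //; left.
by case: (h2 t ht) => x [hx hp]; exists x; split => //; right.
Qed.


Fixpoint bsub G (l : list form) : list (grp Agt * form) :=
  match l with
  | nil => nil
  | Dbox H a :: l' => if gset H \subset gset G then (H, a) :: bsub G l' else bsub G l'
  | _ :: l' => bsub G l'
  end.
Fixpoint rsub G (l : list form) : list form :=
  match l with
  | nil => nil
  | Dbox H a :: l' => if gset H \subset gset G then rsub G l' else Dbox H a :: rsub G l'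
  | f :: l' => f :: rsub G l'
  end.

Lemma perm_swap_mid (f : form) l m : Permutation (f :: l ++ m) (l ++ f :: m).
Proof. by rewrite !cat_app; apply: Permutation_middle. Qed.

Lemma bsub_perm G l :
  Permutation l (rsub G l ++ List.map (fun p => Dbox p.1 p.2) (bsub G l)).
Proof.
elim: l => //= f l IH; case: f => //=; try by move=> *; constructor.
move=> H a; case: ifP => _ /=; last by constructor.
by apply: (perm_trans (perm_skip _ IH)); apply: perm_swap_mid.
Qed.

Lemma bsub_sub G l : List.Forall (fun p => gset p.1 \subset gset G) (bsub G l).
Proof. by elim: l => //= f l IH; case: f => // H a; case: ifP => // h; constructor. Qed.

Lemma rsub_ok G l : (forall f, List.In f l -> ~~ cpl f) -> List.Forall (sigmaK_ok G) (rsub G l).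
Proof.
elim: l => //= f l IH h.
have h' : forall g, List.In g l -> ~~ cpl g by move=> g hg; apply: h; right.
have hf := h f (or_introl erefl); clear h.
case: f hf => //=; try by move=> *; constructor => //; apply: IH.
move=> H a _; case: ifP => hs; first by apply: IH.
by constructor; [rewrite /sigmaK_ok hs | apply: IH].
Qed.

Lemma bsub_in G l H a : List.In (H, a) (bsub G l) <->
  List.In (Dbox H a) l /\ gset H \subset gset G.
Proof.
elim: l => /= [|f l IH]; first by split => // [[]].
case: f; try (move=> * /=; rewrite IH; split; [by case=> h1 h2; split => //; right | by case=> [[e|h1] h2]; [discriminate e | split]]).
move=> H' a'; case: ifP => hs /=.
  split; first by case=> [[<- <-]|/IH []]; [split => //; left | split => //; right].
  by case=> [[[<- <-]|h] hs']; [left | right; apply/IH].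
split; first by move/IH => [] *; split => //; right.
by case=> [[[e1 e2]|h] hs']; [move: hs; rewrite e1 hs' | apply/IH].
Qed.

Lemma omega_of (f : form) : ~~ cpl f -> omega_ok f.
Proof. by case: f. Qed.

Lemma dk_deriv G b l D : (forall f, List.In f l -> ~~ cpl f) ->
  (forall f, List.In f D -> ~~ cpl f) -> List.In (Dbox G b) D ->
  gderiv L (List.map snd (bsub G l)) (b :: nil) -> gderiv L l D.
Proof.
move=> hl hD hb hp; case: (perm_front hb) => D0 pD.
have hOm : List.Forall (omega_ok (Agt:=Agt)) D0.
  apply/List.Forall_forall => f hf; apply: omega_of; apply: hD.
  by apply: (Permutation_in _ (Permutation_sym pD)); right.
have := G_DK (bsub_sub G l) (rsub_ok G hl) hOm hp => h.
apply: (G_perm h); [apply: Permutation_sym; apply: bsub_perm | exact: Permutation_sym].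
Qed.

Definition gx (x : Agt) : grp Agt.
Proof. refine (@Grp _ [set x] _). by apply/set0Pn; exists x; rewrite inE. Defined.
Lemma gset_gx x : gset (gx x) = [set x].
Proof. by []. Qed.

Fixpoint dsub x (l : list form) : list form :=
  match l with
  | nil => nil
  | Dbox H a :: l' => if gset H == [set x] then a :: dsub x l' else dsub x l'
  | _ :: l' => dsub x l'
  end.
Fixpoint rsubD x (l : list form) : list form :=
  match l with
  | nil => nil
  | Dbox H a :: l' => if gset H == [set x] then rsubD x l' else Dbox H a :: rsubD x l'
  | f :: l' => f :: rsubD x l'
  end.

Lemma dsub_perm x l : Permutation l (rsubD x l ++ List.map (Dbox (gx x)) (dsub x l)).
Proof.
elim: l => //= f l IH; case: f => //=; try by move=> *; constructor.
move=> H a; case: ifP => hH /=; last by constructor.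
have -> : H = gx x by apply: grp_eq; apply/eqP.
by apply: (perm_trans (perm_skip _ IH)); apply: perm_swap_mid.
Qed.

Lemma rsubD_ok x l : (forall f, List.In f l -> ~~ cpl f) -> List.Forall (sigmaD_ok x) (rsubD x l).
Proof.
elim: l => //= f l IH h.
have h' : forall g, List.In g l -> ~~ cpl g by move=> g hg; apply: h; right.
have hf := h f (or_introl erefl); clear h.
case: f hf => //=; try by move=> *; constructor => //; apply: IH.
move=> H a _; case: ifP => hs; first by apply: IH.
by constructor; [rewrite /sigmaD_ok => e; move: hs; rewrite e eqxx | apply: IH].
Qed.

Lemma dsub_in x l a : List.In a (dsub x l) <->
  exists H, List.In (Dbox H a) l /\ gset H = [set x].
Proof.
elim: l => /= [|f l IH]; first by split => // [[H []]].
case: f; try (move=> * /=; rewrite IH; split; [by case=> H [h e]; exists H; split => //; right | by case=> H [[e0|h] e]; [discriminate e0 | exists H]]).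
move=> H' a'; case: ifP => hs /=.
  split.
    case=> [<-|/IH [H [h e]]]; first by exists H'; split; [left | apply/eqP].
    by exists H; split => //; right.
  case=> H [[[e1 e2]|h] e]; first by left.
  by right; apply/IH; exists H.
split; first by move/IH => [H [h e]]; exists H; split => //; right.
case=> H [[[e1 e2]|h] e]; last by apply/IH; exists H.
by move: hs; rewrite e1 e eqxx.
Qed.

Lemma dd_deriv x l D : L = LKD -> (forall f, List.In f l -> ~~ cpl f) ->
  (forall f, List.In f D -> ~~ cpl f) -> dsub x l <> nil ->
  gderiv L (dsub x l) nil -> gderiv L l D.
Proof.
move=> HL hl hD hne hp.
have hOm : List.Forall (omega_ok (Agt:=Agt)) D.
  by apply/List.Forall_forall => f hf; apply: omega_of; apply: hD.
have := G_DD HL (gset_gx x) hne (rsubD_ok x hl) hOm hp => h.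
by apply: (G_perm h); [apply: Permutation_sym; apply: dsub_perm | ].
Qed.

Lemma bot_deriv (l D : list form) : List.In Bot l -> gderiv L l D.
Proof.
move=> h; case: (perm_front h) => l0 p.
by apply: (G_perm (G_bot L l0 D)); [apply: Permutation_sym | ].
Qed.

Lemma var_deriv p (l D : list form) : List.In (Var p) l -> List.In (Var p) D -> gderiv L l D.
Proof.
move=> h1 h2; case: (perm_front h1) => l0 p1; case: (perm_front h2) => D0 p2.
by apply: (G_perm (G_id L p l0 D0)); apply: Permutation_sym.
Qed.

Lemma expand_one G (a : form) l D : L = LKT -> List.In (Dbox G a) l ->
  gderiv L (a :: l) D -> gderiv L l D.
Proof.
move=> HL h hd; case: (perm_front h) => l0 p.
have h1 : gderiv L (Dbox G a :: a :: l0) D.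
  apply: (G_perm hd) => //; apply: (perm_trans (perm_skip _ p)); constructor.
by apply: (G_perm (G_DT HL h1)) => //; apply: Permutation_sym.
Qed.

Lemma expand (cs l D : list form) : L = LKT ->
  (forall c, List.In c cs -> exists G, List.In (Dbox G c) l) ->
  gderiv L (cs ++ l) D -> gderiv L l D.
Proof.
move=> HL; elim: cs => //= c cs IH h hd; apply: IH.
  by move=> c' hc'; apply: h; right.
case: (h c (or_introl erefl)) => G hG.
exact: (expand_one HL (proj2 (In_cat _ _ _) (or_intror hG)) hd).
Qed.


Lemma al_And E a b : al E (And a b) = (fsize a + fsize b).+1. Proof. by []. Qed.
Lemma al_Or E a b : al E (Or a b) = (fsize a + fsize b).+1. Proof. by []. Qed.
Lemma al_Imp E a b : al E (Imp a b) = (fsize a + fsize b).+1. Proof. by []. Qed.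
Lemma al_Neg E a : al E (Neg a) = (fsize a).+1. Proof. by []. Qed.
Lemma cw_And a b : cw (And a b) = (fsize a + fsize b).+1. Proof. by []. Qed.
Lemma cw_Or a b : cw (Or a b) = (fsize a + fsize b).+1. Proof. by []. Qed.
Lemma cw_Imp a b : cw (Imp a b) = (fsize a + fsize b).+1. Proof. by []. Qed.
Lemma cw_Neg a : cw (Neg a) = (fsize a).+1. Proof. by []. Qed.

Lemma mdok_cons n f l : md f <= n -> mdok n l -> mdok n (f :: l).
Proof. by move=> h1 h2 g [<-|/h2]. Qed.
Lemma mdok_tail n f l : mdok n (f :: l) -> mdok n l.
Proof. by move=> h g hg; apply: h; right. Qed.
Lemma mdok_head n f l : mdok n (f :: l) -> md f <= n.
Proof. by move=> h; apply: h; left. Qed.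
Lemma mdok_perm n l l' : Permutation l l' -> mdok n l -> mdok n l'.
Proof. by move=> p h g hg; apply: h; apply: (Permutation_in _ (Permutation_sym p)). Qed.

Ltac msolve0 hA hB := rewrite /ma /mb /= ?al_And ?al_Or ?al_Imp ?al_Neg ?cw_And ?cw_Or ?cw_Imp ?cw_Neg in hA hB *; simpl fsize in *; lia.

Lemma decomp n A B (IHB : forall B', B' < B -> Claim n A B') E G D :
  mdok n E -> mdok n G -> mdok n D -> allbox E -> ma E G D <= A -> mb G D <= B ->
  ~ gderiv L (G ++ E) D ->
  (exists f, List.In f G /\ cpl f) \/ (exists f, List.In f D /\ cpl f) -> Concl E G D.
Proof.
move=> mE mG mD bE hA hB nd.
have IH : forall G' D', mdok n G' -> mdok n D' -> ma E G' D' <= A -> mb G' D' < B ->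
    ~ gderiv L (G' ++ E) D' -> Concl E G' D'.
  by move=> G' D' m1 m2 h1 h2 h3; apply: (IHB (mb G' D')) => //.
case=> [[f [hf cf]] | [f [hf cf]]].
- case: (perm_front hf) => G0 pG.
  apply: (concl_perm pG (Permutation_refl D)).
  have {}mG : mdok n (f :: G0) by apply: mdok_perm mG.
  have {}hA : ma E (f :: G0) D <= A by rewrite /ma -(perm_maxl _ pG).
  have {}hB : mb (f :: G0) D <= B by rewrite /mb -(perm_suml _ pG).
  have {}nd : ~ gderiv L ((f :: G0) ++ E) D.
    by move=> h; apply: nd; apply: (G_perm h) => //; apply: perm_catl; apply: Permutation_sym.
  have m0 := mdok_tail mG; have mf := mdok_head mG.
  clear hf pG mG.
  case: f cf mf hA hB nd => //= [a b | a b | a b | a] _ mf hA hB nd.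
  + have := al_le E a; have := al_le E b; have := cw_le a; have := cw_le b => s1 s2 s3 s4.
    have [t [gt [cp [hG hD]]]] : Concl E (a :: b :: G0) D.
    apply: IH => //.
    * by apply: mdok_cons; [lia | apply: mdok_cons; [lia | ]].
    * msolve0 hA hB.
    * msolve0 hA hB.
    * by move=> h; apply: nd; apply: G_Land.
    exists t; split => //; split => //; split => //.
    move=> g [<-|hg] hy /=; last by apply: hG => //; right; right.
    apply/andP; split.
      by apply: hG; [left | apply: hypE_mono hy _ => /=; lia].
    by apply: hG; [right; left | apply: hypE_mono hy _ => /=; lia].
  + have := al_le E a; have := al_le E b; have := cw_le a; have := cw_le b => s1 s2 s3 s4.
    case: (classic (gderiv L ((a :: G0) ++ E) D)) => h1.
    * have [t [gt [cp [hG hD]]]] : Concl E (b :: G0) D.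
    apply: IH => //.
      -- by apply: mdok_cons; [lia | ].
      -- msolve0 hA hB.
      -- msolve0 hA hB.
      -- by move=> h2; apply: nd; apply: G_Lor.
      exists t; split => //; split => //; split => //.
      move=> g [<-|hg] hy /=; last by apply: hG => //; right.
      by rewrite (hG b) ?orbT //; [left | apply: hypE_mono hy _ => /=; lia].
    * have [t [gt [cp [hG hD]]]] : Concl E (a :: G0) D.
    apply: IH => //.
      -- by apply: mdok_cons; [lia | ].
      -- msolve0 hA hB.
      -- msolve0 hA hB.
      exists t; split => //; split => //; split => //.
      move=> g [<-|hg] hy /=; last by apply: hG => //; right.
      by rewrite (hG a) ?orTb //; [left | apply: hypE_mono hy _ => /=; lia].
  + have := al_le E a; have := al_le E b; have := cw_le a; have := cw_le b => s1 s2 s3 s4.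
    case: (classic (gderiv L (G0 ++ E) (a :: D))) => h1.
    * have [t [gt [cp [hG hD]]]] : Concl E (b :: G0) D.
    apply: IH => //.
      -- by apply: mdok_cons; [lia | ].
      -- msolve0 hA hB.
      -- msolve0 hA hB.
      -- by move=> h2; apply: nd; apply: G_Limp.
      exists t; split => //; split => //; split => //.
      move=> g [<-|hg] hy /=; last by apply: hG => //; right.
      by rewrite (hG b) ?implybT //; [left | apply: hypE_mono hy _ => /=; lia].
    * have [t [gt [cp [hG hD]]]] : Concl E G0 (a :: D).
    apply: IH => //.
      -- by apply: mdok_cons; [lia | ].
      -- msolve0 hA hB.
      -- msolve0 hA hB.
      exists t; split => //; split => //; split.
        move=> g [<-|hg] hy /=; last by apply: hG.
        by rewrite (negbTE (hD a _ _)) //; [left | apply: hypE_mono hy _ => /=; lia].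
      by move=> g hg hy; apply: hD => //; right.
  + have := al_le E a; have := cw_le a => s1 s2.
    have [t [gt [cp [hG hD]]]] : Concl E G0 (a :: D).
    apply: IH => //.
    * by apply: mdok_cons; [lia | ].
    * msolve0 hA hB.
    * msolve0 hA hB.
    * by move=> h; apply: nd; apply: G_Lneg.
    exists t; split => //; split => //; split.
      move=> g [<-|hg] hy /=; last by apply: hG.
      by rewrite (hD a) //; [left | apply: hypE_mono hy _ => /=; lia].
    by move=> g hg hy; apply: hD => //; right.
- case: (perm_front hf) => D0 pD.
  apply: (concl_perm (Permutation_refl G) pD).
  have {}mD : mdok n (f :: D0) by apply: mdok_perm mD.
  have {}hA : ma E G (f :: D0) <= A by rewrite /ma -(perm_maxl _ pD).
  have {}hB : mb G (f :: D0) <= B by rewrite /mb -(perm_suml _ pD).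
  have {}nd : ~ gderiv L (G ++ E) (f :: D0).
    by move=> h; apply: nd; apply: (G_perm h) => //; apply: Permutation_sym.
  have m0 := mdok_tail mD; have mf := mdok_head mD.
  clear hf pD mD.
  case: f cf mf hA hB nd => //= [a b | a b | a b | a] _ mf hA hB nd.
  + have := al_le E a; have := al_le E b; have := cw_le a; have := cw_le b => s1 s2 s3 s4.
    case: (classic (gderiv L (G ++ E) (a :: D0))) => h1.
    * have [t [gt [cp [hG hD]]]] : Concl E G (b :: D0).
    apply: IH => //.
      -- by apply: mdok_cons; [lia | ].
      -- msolve0 hA hB.
      -- msolve0 hA hB.
      -- by move=> h2; apply: nd; apply: G_Rand.
      exists t; split => //; split => //; split => //.
      move=> g [<-|hg] hy /=; last by apply: hD => //; right.
      by rewrite (negbTE (hD b _ _)) ?andbF //; [left | apply: hypE_mono hy _ => /=; lia].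
    * have [t [gt [cp [hG hD]]]] : Concl E G (a :: D0).
    apply: IH => //.
      -- by apply: mdok_cons; [lia | ].
      -- msolve0 hA hB.
      -- msolve0 hA hB.
      exists t; split => //; split => //; split => //.
      move=> g [<-|hg] hy /=; last by apply: hD => //; right.
      by rewrite (negbTE (hD a _ _)) //; [left | apply: hypE_mono hy _ => /=; lia].
  + have := al_le E a; have := al_le E b; have := cw_le a; have := cw_le b => s1 s2 s3 s4.
    have [t [gt [cp [hG hD]]]] : Concl E G (a :: b :: D0).
    apply: IH => //.
    * by apply: mdok_cons; [lia | apply: mdok_cons; [lia | ]].
    * msolve0 hA hB.
    * msolve0 hA hB.
    * by move=> h; apply: nd; apply: G_Ror.
    exists t; split => //; split => //; split => //.
    move=> g [<-|hg] hy /=; last by apply: hD => //; right; right.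
    by rewrite (negbTE (hD a _ _)) ?(negbTE (hD b _ _)) //;
      [right; left | apply: hypE_mono hy _ => /=; lia | left | apply: hypE_mono hy _ => /=; lia].
  + have := al_le E a; have := al_le E b; have := cw_le a; have := cw_le b => s1 s2 s3 s4.
    have [t [gt [cp [hG hD]]]] : Concl E (a :: G) (b :: D0).
    apply: IH => //.
    * by apply: mdok_cons; [lia | ].
    * by apply: mdok_cons; [lia | ].
    * msolve0 hA hB.
    * msolve0 hA hB.
    * by move=> h; apply: nd; apply: G_Rimp.
    exists t; split => //; split => //; split.
      by move=> g hg hy; apply: hG => //; right.
    move=> g [<-|hg] hy /=; last by apply: hD => //; right.
    by rewrite (hG a) ?(negbTE (hD b _ _)) //;
      [left | apply: hypE_mono hy _ => /=; lia | left | apply: hypE_mono hy _ => /=; lia].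
  + have := al_le E a; have := cw_le a => s1 s2.
    have [t [gt [cp [hG hD]]]] : Concl E (a :: G) D0.
    apply: IH => //.
    * by apply: mdok_cons; [lia | ].
    * msolve0 hA hB.
    * msolve0 hA hB.
    * by move=> h; apply: nd; apply: G_Rneg.
    exists t; split => //; split => //; split.
      by move=> g hg hy; apply: hG => //; right.
    move=> g [<-|hg] hy /=; last by apply: hD.
    by rewrite negbK (hG a) //; [left | apply: hypE_mono hy _ => /=; lia].
Qed.


Fixpoint cnt (l : list form) : list form :=
  match l with nil => nil | Dbox _ a :: l' => a :: cnt l' | _ :: l' => cnt l' end.

Lemma cnt_in c l : List.In c (cnt l) <-> exists H, List.In (Dbox H c) l.
Proof.
elim: l => /= [|f l IH]; first by split => // [[H []]].
case: f; try (move=> * /=; rewrite IH; split; [by case=> H h; exists H; right | by case=> H [e0|h]; [discriminate e0 | exists H]]).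
move=> H a /=; split.
  by case=> [<-|/IH [H' h]]; [exists H; left | exists H'; right].
by case=> H' [[_ <-]|h]; [left | right; apply/IH; exists H'].
Qed.

Lemma In_filter (p : form -> bool) f l : List.In f (filter p l) <-> List.In f l /\ p f.
Proof.
elim: l => /= [|a l IH]; first by split => // [[]].
case: ifP => pa /=; rewrite IH; split.
- by case=> [<-|[h1 h2]]; split => //; [left | right].
- by case=> [[<-|h1] h2]; [left | right].
- by case=> h1 h2; split => //; right.
- by case=> [[e|h1] h2]; [move: pa; rewrite e h2 | ].
Qed.

Lemma perm_filter (p : form -> bool) l : Permutation l (filter p l ++ filter (fun x => ~~ p x) l).
Proof.
elim: l => //= a l IH; case: (p a) => /=; first by constructor.
by apply: (perm_trans (perm_skip _ IH)); apply: perm_swap_mid.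
Qed.

Lemma perm4 (r c e b : list form) : Permutation ((r ++ c) ++ (e ++ b)) (c ++ ((b ++ r) ++ e)).
Proof.
rewrite !cat_app.
apply: (perm_trans (Permutation_app_tail _ (Permutation_app_comm r c))).
rewrite -List.app_assoc.
apply: Permutation_app_head.
apply: (perm_trans (Permutation_app_head r (Permutation_app_comm e b))).
rewrite List.app_assoc.
apply: Permutation_app_tail; apply: Permutation_app_comm.
Qed.

Lemma expansion n A (IHA : forall A', A' < A -> forall B', Claim n A' B') E G D :
  L = LKT -> mdok n E -> mdok n G -> mdok n D -> allbox E -> ma E G D <= A ->
  ~ gderiv L (G ++ E) D ->
  (forall f, List.In f G -> ~~ cpl f) -> (forall f, List.In f D -> ~~ cpl f) ->
  (exists f, List.In f G /\ isbox f && ~~ dec (List.In f E)) -> Concl E G D.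
Proof.
move=> HL mE mG mD bE hA nd hG hD [f0 [hf0 nf0]].
pose nb f := isbox f && ~~ dec (List.In f E).
pose Bl := filter nb G; pose R := filter (fun x => ~~ nb x) G; pose cs := cnt Bl.
pose E' := E ++ Bl; pose G' := R ++ cs.
have alG : forall f, List.In f G -> al E f <= A.
  by move: hA; rewrite /ma geq_max => /andP [/maxl_le h _].
have A0 : 0 < A.
  have := alG f0 hf0; rewrite /al nf0 orbT; have := fsize_gt0 f0; lia.
have nd' : ~ gderiv L (G' ++ E') D.
  move=> h; apply: nd; apply: (expand HL (cs := cs)).
    move=> c /cnt_in [H /In_filter [hH _]]; exists H; apply/In_cat; left => //.
  apply: (G_perm h) => //; rewrite /G' /E'.
  apply: (perm_trans (perm4 _ _ _ _)).
  rewrite !cat_app; apply: Permutation_app_head; apply: Permutation_app_tail.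
  rewrite -!cat_app; apply: Permutation_sym; exact: perm_filter.
have hcs : forall c, List.In c cs -> exists H, List.In (Dbox H c) Bl by move=> c /cnt_in.
have maA : ma E' G' D <= A.-1.
  rewrite /ma geq_max; apply/andP; split; last first.
    apply/maxl_le => f hf; have := hD f hf; rewrite /cw; case: (cpl f) => //.
  apply/maxl_le => f /In_cat [/In_filter [hf nbf] | hc].
    have := hG f hf; rewrite /al; case: (cpl f) => //= _.
    move: nbf; rewrite /nb negb_and negbK; case: (isbox f) => //= /decP hfE.
    by case: decP => //; case; apply/In_cat; left.
  case: (hcs _ hc) => H /In_filter [hH nbH].
  have e : al E (Dbox H f) = (fsize f).+1 by move: nbH; rewrite /nb /al /= => ->.
  have := alG _ hH; rewrite e; have := al_le E' f; lia.
have [t [gt [cp [hG' hD']]]] : Concl E' G' D.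
  apply: (IHA (A.-1) _ (mb G' D)) => //.
  - lia.
  - by move=> g /In_cat [h|h]; [apply: mE | case/In_filter: h => h _; apply: mG].
  - move=> g /In_cat [/In_filter [h _] | /hcs [H /In_filter [h _]]]; first by apply: mG.
    by have := mG _ h => /=; lia.
  - by move=> g /In_cat [/bE | /In_filter [_ /andP []]].
have Bsat : forall k f, fsize f <= k -> List.In f Bl -> hypE E t f -> sat f t.
  elim=> [|k IHk] f hk hB hy; first by have := fsize_gt0 f; lia.
  have hbx : isbox f by case/In_filter: hB => _ /andP [].
  case: f hk hB hy hbx => // H c hk hB hy _ /=; apply/andP; split.
    apply/implyP => _; apply: hG'.
      by apply/In_cat; right; apply/cnt_in; exists H.
    move=> g /In_cat [gE|gB] hs; first by apply: hy => //=; lia.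
    apply: IHk => //; first by simpl in hk; lia.
    by apply: hypE_mono hy _; simpl; lia.
  apply/allP' => ch hch; apply/implyP => hs; apply: (cp H c) => //.
  by apply/In_cat; right.
have hyE : forall f, hypE E t f -> hypE E' t f.
  move=> f hy g /In_cat [gE|gB] hs; first by apply: hy.
  by apply: (Bsat _ g (leqnn _) gB); apply: hypE_mono hy hs.
exists t; split => //; split.
  by move=> H a hE; apply: cp; apply/In_cat; left.
split; last by move=> f hf hy; apply: hD' => //; apply: hyE.
move=> f hf hy; case nbf: (nb f).
  by apply: (Bsat _ f (leqnn _)) => //; apply/In_filter.
apply: hG'; last by apply: hyE.
by apply/In_cat; left; apply/In_filter; rewrite nbf.
Qed.


Lemma memIn (T : eqType) (x : T) s : x \in s -> List.In x s.
Proof. by elim: s => //= a s IH; rewrite in_cons => /orP [/eqP ->|/IH]; [left | right]. Qed.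

Lemma atomic n (IHn : forall m, m < n -> forall A B, Claim m A B) E G D :
  mdok n E -> mdok n G -> mdok n D -> allbox E -> ~ gderiv L (G ++ E) D ->
  (forall f, List.In f G -> ~~ cpl f) -> (forall f, List.In f D -> ~~ cpl f) ->
  (L = LKT -> forall f, List.In f G -> isbox f -> List.In f E) -> Concl E G D.
Proof.
move=> mE mG mD bE nd hG hD hKT.
pose l := G ++ E.
have hl : forall f, List.In f l -> ~~ cpl f.
  by move=> f /In_cat [/hG //| /bE]; case: f.
have ml : mdok n l by move=> f /In_cat [/mG|/mE].
pose cs t := good t /\ (forall H a, List.In (Dbox H a) l -> gset H \subset tlab t -> sat a t).
(* children for the right boxes *)
case: (@choice_list form
   (fun f t => cs t /\ (forall H b, f = Dbox H b -> gset H \subset tlab t /\ ~~ sat b t)) D) => [f hf | tsD [hD1 hD2]].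
  rewrite /cs; case Ef: f => [p||a1 a2|a1 a2|a1 a2|a1|H b]; try (exists (triv set0); split; [split; [exact: good_triv | by move=> H a _ /gset_sub0] | by []]).
  case: (classic (gderiv L (List.map snd (bsub H l)) (b :: nil))) => hd.
    by exfalso; apply: nd; apply: (dk_deriv hl hD _ hd); rewrite -Ef.
  have := ml; have := mD _ hf; rewrite Ef /=; case: n IHn mE mG mD ml => // n' IHn _ _ _ ml hmd _.
  have [t0 [gt0 [_ [hG0 hD0]]]] : Concl nil (List.map snd (bsub H l)) (b :: nil).
    apply: (IHn n' (ltnSn _) _ _ nil _ (b :: nil)) => //.
    - move=> a /List.in_map_iff [[H' a'] [/= <- /bsub_in [h _]]].
      by have := ml _ h => /=.
    - by move=> g [<-|].
    - by rewrite cats0.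
  exists (relabel t0 (gset H)); split.
    split; first exact: good_relabel.
    move=> H' a ha hs; rewrite sat_relabel; apply: hG0 => //.
    by apply/List.in_map_iff; exists (H', a); split => //; apply/bsub_in.
  move=> H' b' [<- <-]; split => //; rewrite sat_relabel.
  by apply: hD0 => //; left.
(* children for agents (KD) *)
have [tsA [hA1 hA2]] : exists tsA : list tree,
    (L = LKD -> forall x, exists t, List.In t tsA /\ x \in tlab t) /\
    (forall t, List.In t tsA -> cs t).
  case HL: L; try by exists nil.
  case: (@choice_list Agt (fun x t => cs t /\ x \in tlab t) (enum Agt)) => [x _ | ts [h1 h2]].
    rewrite /cs; case: (classic (dsub x l = nil)) => hx.
      exists (triv [set x]); split; last by rewrite /= inE.
      split; first exact: good_triv.
      move=> H a ha /gset_sub1 e.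
      have : List.In a (dsub x l) by apply/dsub_in; exists H.
      by rewrite hx.
    case: (classic (gderiv L (dsub x l) nil)) => hd.
      by exfalso; apply: nd; apply: (dd_deriv HL hl hD hx hd).
    case Ex: (dsub x l) hx hd => [//|a0 r] _ hd.
    have : List.In a0 (dsub x l) by rewrite Ex; left.
    case/dsub_in => H0 [h0 _]; have := ml _ h0 => /=.
    case: n IHn mE mG mD ml => // n' IHn _ _ _ ml _.
    have [t0 [gt0 [_ [hG0 _]]]] : Concl nil (dsub x l) nil.
      apply: (IHn n' (ltnSn _) _ _ nil _ nil) => //.
      - move=> a /dsub_in [H [h _]]; by have := ml _ h => /=.
      - by rewrite cats0 Ex.
    exists (relabel t0 [set x]); split; last by rewrite /= inE.
    split; first exact: good_relabel.
    move=> H a ha /gset_sub1 e; rewrite sat_relabel; apply: hG0 => //.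
    by apply/dsub_in; exists H.
  exists ts; split.
    by move=> _ x; case: (h1 x (memIn (mem_enum _ x))) => t [ht [_ hx]]; exists t.
  by move=> t /h2 [x [_ []]].
pose root := Node (fun p => dec (List.In (Var p) G))
                  (match L with LKT => setT | _ => set0 end) set0 (tsD ++ tsA).
have hch : forall c, List.In c (tch root) -> cs c.
  move=> c; rewrite /root /= => /In_cat [/hD2 [f [_ [h _]]] //| /hA2 //].
exists root; split.
  constructor; last by move=> c /hch [].
  rewrite /cond; case HL: L => //.
  move=> x; right; case: (hA1 HL x) => t [ht hx]; exists t; split => //.
  by apply/In_cat; right.
split.
  move=> H a ha c hc hs; case: (hch c hc) => _ h; apply: h hs.
  by apply/In_cat; right.
have hbox : forall H a, List.In (Dbox H a) l -> ~ (L = LKT) -> sat (Dbox H a) root.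
  move=> H a ha nKT /=; apply/andP; split.
    apply/implyP; case HL: L => //= hs; by case: (gset_sub0 hs).
  apply/allP' => c hc; apply/implyP => hs; case: (hch c hc) => _ h; exact: h _ _ ha hs.
split.
- move=> f hf hy; have := hG f hf; case: f hf hy => //.
  + by move=> p hf _ _ /=; apply/decP.
  + by move=> hf _ _; exfalso; apply: nd; apply: bot_deriv; apply/In_cat; left.
  + move=> H a hf hy _; case: (classic (L = LKT)) => HL.
      by apply: hy => //; apply: hKT.
    by apply: hbox => //; apply/In_cat; left.
- move=> f hf hy; have := hD f hf; case: f hf hy => //.
  + move=> p hf _ _ /=; apply/decP => hp; apply: nd.
    by apply: var_deriv hf; apply/In_cat; left.
  + move=> H b hf _ _; case: (hD1 _ hf) => t [ht [_ hb]].
    case: (hb H b erefl) => hs hnb /=; apply/negP => /andP [_ /allP' hall].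
    by move: (hall t (proj2 (In_cat _ _ _) (or_introl ht))); rewrite hs /= (negbTE hnb).
Qed.


Lemma step n A B (IHn : forall m, m < n -> forall A B, Claim m A B)
  (IHA : forall A', A' < A -> forall B', Claim n A' B')
  (IHB : forall B', B' < B -> Claim n A B') : Claim n A B.
Proof.
move=> E G D mE mG mD bE hA hB nd.
case: (classic ((exists f, List.In f G /\ cpl f) \/ (exists f, List.In f D /\ cpl f))) => hc.
  exact: (decomp IHB mE mG mD bE hA hB nd hc).
have hG : forall f, List.In f G -> ~~ cpl f.
  by move=> f hf; apply/negP => cf; apply: hc; left; exists f.
have hD : forall f, List.In f D -> ~~ cpl f.
  by move=> f hf; apply/negP => cf; apply: hc; right; exists f.
case: (classic (L = LKT /\ exists f, List.In f G /\ isbox f && ~~ dec (List.In f E))) => [[HL hx]|hx].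
  exact: (expansion IHA HL mE mG mD bE hA nd hG hD hx).
apply: (atomic IHn mE mG mD bE nd hG hD) => HL f hf hb.
apply: NNPP => nf; apply: hx; split => //; exists f; split => //.
by rewrite hb /=; apply/negP => /decP.
Qed.

Lemma main n A B : Claim n A B.
Proof.
elim/ltn_ind: n A B => n IHn A.
elim/ltn_ind: A => A IHA B.
elim/ltn_ind: B => B IHB.
exact: step.
Qed.

End S.

Theorem theorem3p14 (Agt : finType) (Agt_ne : 0 < #|Agt|) (L : logic) (A : form Agt) :
  hderiv L A <-> gderiv L nil (A :: nil).
Proof.
split.
- move=> hA; apply: NNPP => nd.
  have [t [gt [_ [_ hD]]]] : Concl L nil nil (A :: nil).
    apply: (@main Agt L (md A) (ma nil nil (A :: nil)) (mb nil (A :: nil))) => //.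
    by move=> g [<-|].
  have := hD A (or_introl erefl) (fun g hg => match hg with end).
  by rewrite (hsound hA gt).
- move=> h; apply: (hmp1 (g2h h)) => v /=.
  by case: (peval v A).
Qed.
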